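(* For $A,x\in\mathbb{R}$ define $E_0(A,x):=1$, $E_1(A,x):=e^{(1-x)A}$ and, for $n\ge2$, \[ E_n(A,x):=\begin{cases} \exp\!\Big(\big[x(E_1+E_3+\cdots+E_{n-1})-\tfrac n2\big]A\Big), & n \text{ even},\\[4pt] \exp\!\Big(\big[\tfrac{n+1}{2}-x(E_0+E_2+\cdots+E_{n-1})\big]A\Big), & n\text{ odd},\end{cases} \] with all $E_j$ evaluated at $(A,x)$. Define $\varphi_1(A,x):=x-1$, $\varphi_n(A,x):=\varphi_{n-1}(A,x)-1+xE_{n-1}(A,x)$ for $n\ge2$, and the polynomial $p_n(A):=\frac{\partial\varphi_n}{\partial x}(A,1)$. Then for every integer $n\ge1$, $\deg p_n=n-1$; moreover the leading coefficient of $p_n$ equals $1$ if $n\equiv0$ or $n\equiv1\pmod 4$, and equals $-1$ if $n\equiv2$ or $n\equiv3\pmod4$. *)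

(* Defs.v *)
From HB Require Import structures.
From mathcomp Require Import all_boot all_order all_algebra.
From mathcomp Require Import all_classical all_reals all_analysis.
Set Implicit Arguments. Unset Strict Implicit. Unset Printing Implicit Defensive.
Import Order.TTheory GRing.Theory Num.Theory.
Local Open Scope ring_scope.

Section Defs.
Variable R : realType.

(* Given the list s = [:: E_0; ...; E_(m-1)], compute E_m (m >= 1). *)
Definition Enext (A x : R) (s : seq R) (m : nat) : R :=
  if m == 1%N then expR ((1 - x) * A)
  else if odd m then
    expR (((m.+1)%:R / 2 - x * \sum_(j < m | ~~ odd j) s`_j) * A)
  else
    expR ((x * \sum_(j < m | odd j) s`_j - m%:R / 2) * A).

Fixpoint Eseq (A x : R) (n : nat) : seq R :=
  match n with
  | 0 => [:: 1]
  | n'.+1 => let s := Eseq A x n' in rcons s (Enext A x s n'.+1)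
  end.

Definition E (n : nat) (A x : R) : R := nth 0 (Eseq A x n) n.

(* phi_1 = x - 1, phi_n = phi_(n-1) - 1 + x E_(n-1); phi_0 is an unused dummy. *)
Fixpoint phi (n : nat) (A x : R) : R :=
  match n with
  | 0 => 0
  | n'.+1 => if n' is 0 then x - 1 else phi n' A x - 1 + x * E n' A x
  end.
End Defs.

(* Main.v *)
Require Import Defs.
From HB Require Import structures.
From mathcomp Require Import all_boot all_order all_algebra.
From mathcomp Require Import all_classical all_reals all_analysis.
From mathcomp Require Import zify ring lra.
Import Order.TTheory GRing.Theory Num.Theory.
Local Open Scope ring_scope.

Section Poly.
Set Implicit Arguments.
Variable R : realType.

Definition epnext (s : seq {poly R}) (m : nat) : {poly R} :=
  if odd m then - ((((m.+1)%:R / 2)%:P + \sum_(j < m | ~~ odd j) s`_j) * 'X)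
  else ((m%:R / 2)%:P + \sum_(j < m | odd j) s`_j) * 'X.

Fixpoint epseq (n : nat) : seq {poly R} :=
  match n with
  | 0 => [:: 0]
  | n'.+1 => rcons (epseq n') (epnext (epseq n') n'.+1)
  end.

Definition ep n := nth 0 (epseq n) n.

Lemma size_epseq n : size (epseq n) = n.+1.
Proof. by elim: n => //= n IH; rewrite size_rcons IH. Qed.

Lemma nth_epseq n j : (j <= n)%N -> nth 0 (epseq n) j = ep j.
Proof.
elim: n => [|n IH]; first by rewrite leqn0 => /eqP ->.
rewrite leq_eqVlt => /orP [/eqP -> //|].
rewrite ltnS => hj /=; rewrite nth_rcons size_epseq ltnS hj; exact: IH.
Qed.

Lemma ep0 : ep 0 = 0. Proof. by []. Qed.

Lemma epS m : ep m.+1 = epnext (epseq m) m.+1.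
Proof. by rewrite /ep /= nth_rcons size_epseq ltnn eqxx. Qed.

Lemma sum_epseq m (P : pred nat) :
  \sum_(j < m.+1 | P j) (epseq m)`_j = \sum_(j < m.+1 | P j) ep j.
Proof. by apply: eq_bigr => j _; rewrite nth_epseq // -ltnS. Qed.

Definition T (n : nat) : R := if (n %% 4 == 0)%N || (n %% 4 == 1)%N then 1 else -1.

Lemma TS m : T m.+1 = if odd m then - T m else T m.
Proof.
rewrite /T; have hodd := modn2 m.
have : (m %% 4 = 0 \/ m %% 4 = 1 \/ m %% 4 = 2 \/ m %% 4 = 3)%N by lia.
case=> [h|[h|[h|h]]].
- have -> : (m.+1 %% 4 = 1)%N by lia. have -> : odd m = false by move: hodd; case: (odd m) => /=; lia. by rewrite h.
- have -> : (m.+1 %% 4 = 2)%N by lia. have -> : odd m = true by move: hodd; case: (odd m) => /=; lia. by rewrite h /= ?opprK.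
- have -> : (m.+1 %% 4 = 3)%N by lia. have -> : odd m = false by move: hodd; case: (odd m) => /=; lia. by rewrite h.
- have -> : (m.+1 %% 4 = 0)%N by lia. have -> : odd m = true by move: hodd; case: (odd m) => /=; lia. by rewrite h /= ?opprK.
Qed.

Lemma size_sum_le n (F : nat -> {poly R}) k :
  (forall i, (i < n)%N -> (size (F i) <= k)%N) -> (size (\sum_(i < n) F i)%R <= k)%N.
Proof.
elim: n => [|n IH] h; first by rewrite big_ord0 size_poly0.
rewrite big_ord_recr /=; apply: leq_trans (size_polyD _ _) _.
rewrite geq_max IH ?h // => i hi; apply: h; exact: ltnW.
Qed.

Lemma Qlem m (c : R) (P : pred nat) :
  (1 <= m)%N -> P m.-1 -> (m = 1%N -> c = 1) ->
  (forall j, (1 <= j < m)%N -> size (ep j) = j.+1 /\ lead_coef (ep j) = T j.+1) ->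
  size (c%:P + \sum_(j < m | P j) ep j) = m /\
  lead_coef (c%:P + \sum_(j < m | P j) ep j) = T m.
Proof.
case: m => [//|[|k]] _ hP hc hj.
  rewrite big_mkcond big_ord1 ep0 if_same addr0 size_polyC lead_coefC hc //.
  by rewrite oner_eq0.
rewrite big_mkcond big_ord_recr /= hP addrA addrC.
have [hs hl] := hj k.+1 (leqnn _).
have hlt : (size (c%:P + \sum_(i < k.+1) (if P i then ep i else 0))%R < size (ep k.+1))%N.
  rewrite hs ltnS; apply: leq_trans (size_polyD _ _) _.
  rewrite geq_max (leq_trans (size_polyC_leq1 _)) //.
  apply: (@size_sum_le _ (fun i => if P i then ep i else 0)) => i hi; case: (P i); last by rewrite size_poly0.
  case: i hi => [|i] hi; first by rewrite ep0 size_poly0.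
  by have [-> _] := hj i.+1 (ltnW hi).
by rewrite size_polyDl // lead_coefDl.
Qed.

Lemma ep_deg n : forall j, (1 <= j <= n)%N ->
  size (ep j) = j.+1 /\ lead_coef (ep j) = T j.+1.
Proof.
elim: n => [|n IH] j hj; first by lia.
have [hjn|] := leqP j n; first by apply: IH; lia.
move=> hnj; have -> : j = n.+1 by lia.
have IH' : forall j, (1 <= j < n.+1)%N -> size (ep j) = j.+1 /\ lead_coef (ep j) = T j.+1.
  by move=> k hk; apply: IH; lia.
rewrite epS /epnext TS; case: ifP => ho.
  rewrite (sum_epseq n (fun j => ~~ odd j)).
  have hP : ~~ odd n by move: ho => /=; case: (odd n).
  have hc : n.+1 = 1%N -> (n.+2)%:R / 2 = 1 :> R.
    by case => ->; rewrite divff // pnatr_eq0.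
  have [hs hl] := @Qlem n.+1 ((n.+2)%:R / 2) (fun j => ~~ odd j) isT hP hc IH'.
  have q0 : (((n.+2)%:R / 2)%:P + \sum_(j < n.+1 | ~~ odd j) ep j)%R != 0.
    by rewrite -size_poly_gt0 hs.
  by rewrite size_polyN size_mulX // hs lead_coefN lead_coefMX hl.
rewrite (sum_epseq n odd).
have hP : odd n by move: ho => /=; case: (odd n).
have hc : n.+1 = 1%N -> (n.+1)%:R / 2 = 1 :> R by move=> e; rewrite e in ho.
have [hs hl] := @Qlem n.+1 ((n.+1)%:R / 2) odd isT hP hc IH'.
have q0 : (((n.+1)%:R / 2)%:P + \sum_(j < n.+1 | odd j) ep j)%R != 0.
  by rewrite -size_poly_gt0 hs.
by rewrite size_mulX // hs lead_coefMX hl.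
Qed.
End Poly.

Section Ana.
Set Implicit Arguments.
Variable R : realType.

Lemma deq (f : R -> R) (x a b : R) : is_derive x 1 f a -> a = b -> is_derive x 1 f b.
Proof. by move=> h <-. Qed.

Lemma bigS (V : nmodType) m (P : pred nat) (F : nat -> V) : \sum_(j < m.+1 | P j) F j = \sum_(j < m | P j) F j + (if P m then F m else 0).
Proof. by rewrite big_mkcond big_ord_recr /= -big_mkcond. Qed.

Lemma d_ext (f g : R -> R) (x d : R) : (forall y, f y = g y) ->
  is_derive x 1 g d -> is_derive x 1 f d.
Proof. by move=> h; have -> : f = g by apply: funext. Qed.

Lemma d_id (x : R) : is_derive x 1 (fun y : R => y) 1.
Proof. exact: is_derive_id. Qed.

Lemma d_cst (x k : R) : is_derive x 1 (fun _ : R => k) 0.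
Proof. exact: is_derive_cst. Qed.

Lemma d_add (f g : R -> R) (x df dg : R) : is_derive x 1 f df -> is_derive x 1 g dg ->
  is_derive x 1 (fun y => f y + g y) (df + dg).
Proof. move=> ? ?; exact: is_deriveD. Qed.

Lemma d_mul (f g : R -> R) (x df dg : R) : is_derive x 1 f df -> is_derive x 1 g dg ->
  is_derive x 1 (fun y => f y * g y) (f x * dg + g x * df).
Proof. move=> ? ?; exact: is_deriveM. Qed.

Lemma d_exp (f : R -> R) (x df : R) : is_derive x 1 f df ->
  is_derive x 1 (fun y => expR (f y)) (expR (f x) * df).
Proof. move=> ?; exact: (@is_derive1_comp R expR f). Qed.

Lemma d_csub (f : R -> R) (x df k : R) : is_derive x 1 f df ->
  is_derive x 1 (fun y => k - f y) (- df).
Proof.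
move=> h; have h2 : is_derive x 1 (fun y => - f y) (- df) by exact: is_deriveN.
have h3 := d_add (d_cst x k) h2; by rewrite sub0r in h3.
Qed.

Lemma d_subc (f : R -> R) (x df k : R) : is_derive x 1 f df ->
  is_derive x 1 (fun y => f y - k) df.
Proof.
move=> h; have h3 := d_add h (d_cst x (- k)); by rewrite addr0 in h3.
Qed.

Lemma d_mulc (f : R -> R) (x df k : R) : is_derive x 1 f df ->
  is_derive x 1 (fun y => f y * k) (df * k).
Proof.
move=> h; have h3 := d_mul h (d_cst x k); by rewrite mulr0 add0r mulrC in h3.
Qed.

Lemma dsum n (P : pred nat) (F : nat -> R -> R) (dF : nat -> R) (x : R) :
  (forall i, (i < n)%N -> P i -> is_derive x 1 (F i) (dF i)) ->
  is_derive x 1 (fun y => \sum_(i < n | P i) F i y) (\sum_(i < n | P i) dF i).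
Proof.
elim: n => [|n IH] h.
  have -> : (fun y => \sum_(i < 0 | P i) F i y) = (fun _ => 0).
    by apply: funext => y; rewrite big_ord0.
  by rewrite big_ord0; exact: d_cst.
have -> : (fun y => \sum_(i < n.+1 | P i) F i y) =
    (fun y => \sum_(i < n | P i) F i y + (if P n then F n y else 0)).
  by apply: funext => y; rewrite big_mkcond big_ord_recr /= -big_mkcond.
rewrite big_mkcond big_ord_recr /= -big_mkcond.
apply: d_add; first by apply: IH => i hi; apply: h; exact: ltnW.
case: ifP => hP; last exact: d_cst.
exact: h.
Qed.

Section E.
Variable A : R.

Lemma size_Eseq x n : size (Eseq A x n) = n.+1.
Proof. by elim: n => //= n IH; rewrite size_rcons IH. Qed.

Lemma nth_Eseq x n j : (j <= n)%N -> nth 0 (Eseq A x n) j = E j A x.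
Proof.
elim: n => [|n IH]; first by rewrite leqn0 => /eqP ->.
rewrite leq_eqVlt => /orP [/eqP -> //|].
rewrite ltnS => hj /=; rewrite nth_rcons size_Eseq ltnS hj; exact: IH.
Qed.

Lemma E_S x m : E m.+1 A x = Enext A x (Eseq A x m) m.+1.
Proof. by rewrite /E /= nth_rcons size_Eseq ltnn eqxx. Qed.

Lemma sum_Eseq x m (P : pred nat) :
  \sum_(j < m.+1 | P j) (Eseq A x m)`_j = \sum_(j < m.+1 | P j) E j A x.
Proof. by apply: eq_bigr => j _; rewrite nth_Eseq // -ltnS. Qed.

Lemma cnt m : (\sum_(j < m | odd j) (1:R)) * 2 = m%:R - (odd m)%:R /\
  (\sum_(j < m | ~~ odd j) (1:R)) * 2 = m%:R + (odd m)%:R.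
Proof.
elim: m => [|m [IH1 IH2]]; first by rewrite !big_ord0 !mul0r subr0 addr0.
rewrite (@bigS _ m odd (fun=> 1:R)) (@bigS _ m (fun j => ~~ odd j) (fun=> 1:R)) -natr1 /=.
move: IH1 IH2; case: (odd m) => /= IH1 IH2; split; lra.
Qed.

Lemma E_main n : forall j, (j <= n)%N ->
  E j A 1 = 1 /\ is_derive (1:R) 1 (fun x => E j A x) (ep R j).[A].
Proof.
elim: n => [|n IH] j hj.
  have -> : j = 0%N by lia.
  split => //.
  have -> : (fun x : R => E 0 A x) = (fun _ => 1) by apply: funext.
  rewrite ep0 horner0; exact: d_cst.
have [hjn|hnj] := leqP j n; first exact: IH.
have -> : j = n.+1 by lia.
have IH1 : forall j, (j <= n)%N -> E j A 1 = 1 by move=> i hi; case: (IH i hi).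
have IH2 : forall j, (j <= n)%N -> is_derive (1:R) 1 (fun x => E j A x) (ep R j).[A].
  by move=> i hi; case: (IH i hi).
clear IH hj hnj j.
have two0 : (2%:R : R) != 0 by rewrite pnatr_eq0.
case: n IH1 IH2 => [|k] IH1 IH2.
  have hE : forall x, E 1 A x = expR ((1 - x) * A) by move=> x; rewrite E_S.
  split; first by rewrite hE subrr mul0r expR0.
  have -> : (ep R 1).[A] = expR ((1 - 1) * A) * (- 1 * A).
    rewrite epS /epnext /= (sum_epseq R 0 (fun j => ~~ odd j)) big_mkcond big_ord1 /= ep0.
    rewrite addr0 hornerN hornerMX hornerC divff // subrr mul0r expR0.
    by rewrite !mul1r mulN1r.
  apply: (@d_ext (fun x => E 1 A x) _ _ _ hE); apply: d_exp; apply: d_mulc; apply: d_csub; exact: d_id.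
have hodd2 : odd k.+2 = odd k by rewrite /= negbK.
have hk3 : (k.+3)%:R = (k.+2)%:R + 1 :> R by rewrite natr1.
case ho : (odd k).
  set c := (k.+3)%:R / 2 : R.
  have hE : forall x, E k.+2 A x =
      expR ((c - x * \sum_(j < k.+2 | ~~ odd j) E j A x) * A).
    move=> x; rewrite E_S /Enext hodd2 ho /=.
    by rewrite (sum_Eseq x k.+1 (fun j => ~~ odd j)).
  have S1 : \sum_(j < k.+2 | ~~ odd j) E j A 1 = c.
    rewrite (eq_bigr (fun=> 1)); last by move=> i _; apply: IH1; rewrite -ltnS.
    have [_ c2] := cnt k.+2; rewrite hodd2 ho /= in c2.
    by rewrite /c hk3 -c2 mulfK.
  have dS : is_derive (1:R) 1 (fun x => \sum_(j < k.+2 | ~~ odd j) E j A x)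
      (\sum_(j < k.+2 | ~~ odd j) (ep R j).[A]).
    apply: (@dsum k.+2 (fun j => ~~ odd j) (fun i x => E i A x) (fun i => (ep R i).[A]) 1) => i hi _.
    by apply: IH2; rewrite -ltnS.
  have hd := d_exp (d_mulc A (d_csub c (d_mul (d_id 1) dS))).
  split; first by rewrite hE mul1r S1 subrr mul0r expR0.
  apply: (@d_ext (fun x => E k.+2 A x) _ _ _ hE); apply: deq hd _.
  rewrite epS /epnext hodd2 ho (sum_epseq R k.+1 (fun j => ~~ odd j)).
  rewrite hornerN hornerMX hornerD hornerC horner_sum.
  rewrite mul1r S1 subrr mul0r expR0 -/c; ring.
set c := (k.+2)%:R / 2 : R.
have hE : forall x, E k.+2 A x =
    expR ((x * \sum_(j < k.+2 | odd j) E j A x - c) * A).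
  move=> x; rewrite E_S /Enext hodd2 ho /=.
  by rewrite (sum_Eseq x k.+1 odd).
have S1 : \sum_(j < k.+2 | odd j) E j A 1 = c.
  rewrite (eq_bigr (fun=> 1)); last by move=> i _; apply: IH1; rewrite -ltnS.
  have [c2 _] := cnt k.+2; rewrite hodd2 ho /= subr0 in c2.
  by rewrite /c -c2 mulfK.
have dS : is_derive (1:R) 1 (fun x => \sum_(j < k.+2 | odd j) E j A x)
    (\sum_(j < k.+2 | odd j) (ep R j).[A]).
  apply: (@dsum k.+2 odd (fun i x => E i A x) (fun i => (ep R i).[A]) 1) => i hi _.
  by apply: IH2; rewrite -ltnS.
have hd := d_exp (d_mulc A (d_subc c (d_mul (d_id 1) dS))).
split; first by rewrite hE mul1r S1 subrr mul0r expR0.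
apply: (@d_ext (fun x => E k.+2 A x) _ _ _ hE); apply: deq hd _.
rewrite epS /epnext hodd2 ho (sum_epseq R k.+1 odd).
rewrite hornerMX hornerD hornerC horner_sum.
rewrite mul1r S1 subrr mul0r expR0 -/c; ring.
Qed.

End E.
End Ana.

Section Phi.
Variable R : realType.

Definition pp (n : nat) : {poly R} := n%:R%:P + \sum_(j < n) ep R j.

Lemma phi_der (A : R) n : (1 <= n)%N ->
  is_derive (1:R) 1 (fun x => phi n A x) (pp n).[A].
Proof.
elim: n => [//|n IH] _.
case: n IH => [|n] IH.
  apply: (@d_ext R (fun x => phi 1 A x) (fun y => y - 1) _ _ (fun y => erefl)).
  apply: (deq (d_subc 1 (d_id R 1))).
  by rewrite /pp big_ord1 ep0 addr0 hornerC.
have [E1 dE] := (@E_main R A n.+1 n.+1 (leqnn n.+1)).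
have h := d_add (d_subc 1 (IH isT)) (d_mul (d_id R 1) dE).
apply: (@d_ext R (fun x => phi n.+2 A x) _ _ _ (fun y => erefl)).
apply: (deq h).
rewrite /pp [\sum_(j < n.+2) _]big_ord_recr /= !hornerD !hornerC E1 -(@natr1 R n.+1).
ring.
Qed.

End Phi.

Theorem lemma4p5 (R : realType) (n : nat) : (1 <= n)%N ->
  exists p : {poly R},
    (forall A : R, is_derive (1 : R) (1 : R) (fun x : R => phi n A x) p.[A]) /\
    size p = n /\
    lead_coef p = (if (n %% 4 == 0)%N || (n %% 4 == 1)%N then 1 else -1).
Proof.
move=> hn; exists (pp R n); split; first by move=> A; exact: phi_der.
case: n hn => [//|[|k]] _.
  by rewrite /pp big_ord1 ep0 addr0 size_polyC oner_eq0 lead_coefC.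
have hc : k.+2 = 1%N -> (k.+2)%:R = 1 :> R by [].
have hj : forall j, (1 <= j < k.+2)%N -> size (ep R j) = j.+1 /\ lead_coef (ep R j) = T R j.+1.
  by move=> j hj; apply: (@ep_deg R k.+1); lia.
have [hs hl] := @Qlem R k.+2 (k.+2)%:R (fun _ => true) isT isT hc hj.
by split; [exact: hs | exact: hl].
Qed.
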